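(* Let $0<\varepsilon<\pi/2$ and $0<\eta<\min\{\pi/4,\varepsilon/2\}$. Then there exists a constant $c>0$ such that $$c(|\lambda|^{1/2}+\tilde A)^3\le|\det L|\qquad\text{for all }\lambda\in\Sigma_\varepsilon,\ \xi'\in\tilde\Sigma_\eta^{n-1}.$$
   Context: $\rho_\pm,\mu_\pm>0$ are constants. $\Sigma_\varepsilon=\{\lambda\in\mathbb C\setminus\{0\}:|\arg\lambda|<\pi-\varepsilon\}$, $\tilde\Sigma_\eta=\{z\in\mathbb C\setminus\{0\}:|\arg z|<\eta\}\cup\{z\in\mathbb C\setminus\{0\}:\pi-\eta<|\arg z|\}$, and $\xi'=(\xi_1,\dots,\xi_{n-1})\in\tilde\Sigma_\eta^{n-1}$. Set $A=\sqrt{\sum_{j=1}^{n-1}\xi_j^2}$, $B_\pm=\sqrt{\rho_\pm\mu_\pm^{-1}\lambda+A^2}$ (square roots with positive real part), $\tilde A=\sqrt{\sum_{j=1}^{n-1}|\xi_j|^2}$, and $$L=\begin{bmatrix}\mu_+(B_++A)&\mu_+(B_+^2+A^2)&-\mu_-(B_-+A)&-\mu_-(B_-^2+A^2)\\ \mu_+(B_+-A)&-2\mu_+AB_+&\mu_-(B_--A)&-2\mu_-AB_-\\ 1&B_+&1&B_-\\ 0&1&0&-1\end{bmatrix}.$$ *)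

(* Defs.v *)
From HB Require Import structures.
From mathcomp Require Import all_boot all_order all_algebra.
From mathcomp Require Import complex.
From mathcomp Require Import reals trigo.

Set Implicit Arguments.
Unset Strict Implicit.
Unset Printing Implicit Defensive.

Import Order.TTheory GRing.Theory Num.Theory.
Local Open Scope ring_scope.

Section Defs.
Variable R : realType.

Definition cmod (z : R[i]) : R := Num.sqrt (complex.Re z ^+ 2 + complex.Im z ^+ 2).

Definition polar_arg (z : R[i]) (P : R -> Prop) : Prop :=
  exists theta : R, [/\ - pi < theta <= pi,
    z = Complex (cmod z * cos theta) (cmod z * sin theta) & P theta].

Definition Sigma (eps : R) (lam : R[i]) : Prop :=
  lam != 0 /\ polar_arg lam (fun theta => `|theta| < pi - eps).

Definition tSigma (eta : R) (z : R[i]) : Prop :=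
  z != 0 /\ polar_arg z (fun theta => `|theta| < eta \/ pi - eta < `|theta|).

(* principal square root: the square root with nonnegative real part
   (positive real part off the half-line (-oo,0]) *)
Definition csqrt (w : R[i]) : R[i] :=
  Complex (Num.sqrt ((cmod w + complex.Re w) / 2))
          ((if 0 <= complex.Im w then 1 else -1) * Num.sqrt ((cmod w - complex.Re w) / 2)).

Definition Afun (n : nat) (xi : 'I_n -> R[i]) : R[i] :=
  csqrt (\sum_(j < n) xi j ^+ 2).

Definition Bfun (rho mu : R) (lam A : R[i]) : R[i] :=
  csqrt (Complex (rho / mu) 0 * lam + A ^+ 2).

Definition tildeA (n : nat) (xi : 'I_n -> R[i]) : R :=
  Num.sqrt (\sum_(j < n) cmod (xi j) ^+ 2).

Definition mx_of_rows (rows : seq (seq R[i])) : 'M[R[i]]_4 :=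
  \matrix_(i < 4, j < 4) nth 0 (nth [::] rows i) j.

Definition Lmat (rp rm mp mm : R) (n : nat) (lam : R[i]) (xi : 'I_n -> R[i])
  : 'M[R[i]]_4 :=
  let A := Afun xi in
  let Bp := Bfun rp mp lam A in
  let Bm := Bfun rm mm lam A in
  let mup := Complex mp 0 in
  let mum := Complex mm 0 in
  mx_of_rows
    [:: [:: mup * (Bp + A); mup * (Bp ^+ 2 + A ^+ 2);
            - (mum * (Bm + A)); - (mum * (Bm ^+ 2 + A ^+ 2))];
        [:: mup * (Bp - A); - (2 * mup * A * Bp);
            mum * (Bm - A); - (2 * mum * A * Bm)];
        [:: 1; Bp; 1; Bm];
        [:: 0; 1; 0; -1] ].

End Defs.

(* Main.v *)
Require Import Defs.
From HB Require Import structures.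
From mathcomp Require Import all_boot all_order all_algebra.
From mathcomp Require Import complex.
From mathcomp Require Import reals trigo.
From mathcomp Require Import ring lra.
Import Order.TTheory GRing.Theory Num.Theory.
Local Open Scope ring_scope.
Local Open Scope complex_scope.
Set Implicit Arguments.
Unset Strict Implicit.
Unset Printing Implicit Defensive.

Lemma cmodE (R : realType) (z : R[i]) : cmod z = Normc.normc z.
Proof. by case: z. Qed.

Lemma cmod_ge0 (R : realType) (z : R[i]) : 0 <= cmod z.
Proof. exact: sqrtr_ge0. Qed.

Lemma cmod_sq (R : realType) (z : R[i]) : cmod z ^+ 2 = complex.Re z ^+ 2 + complex.Im z ^+ 2.
Proof. by rewrite /cmod sqr_sqrtr // addr_ge0 // sqr_ge0. Qed.

Lemma cmodM (R : realType) (z w : R[i]) : cmod (z * w) = cmod z * cmod w.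
Proof. by rewrite !cmodE Normc.normcM. Qed.

Lemma cmodD (R : realType) (z w : R[i]) : cmod (z + w) <= cmod z + cmod w.
Proof. by rewrite !cmodE le_normcD. Qed.

Lemma cmodV (R : realType) (z : R[i]) : cmod (z ^-1) = (cmod z)^-1.
Proof. by rewrite !cmodE Normc.normcV. Qed.

Lemma cmod_eq0 (R : realType) (z : R[i]) : (cmod z == 0) = (z == 0).
Proof.
apply/eqP/eqP => [|->]; last by rewrite cmodE Normc.normc0.
by rewrite cmodE => /Normc.eq0_normc.
Qed.

Lemma Re_le_cmod (R : realType) (z : R[i]) : complex.Re z <= cmod z.
Proof.
have h1 := cmod_sq z; have h2 := cmod_ge0 z.
have h3 := sqr_ge0 (complex.Im z). nra.
Qed.

Lemma cReM (R : realType) (z w : R[i]) :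
  complex.Re (z * w) = complex.Re z * complex.Re w - complex.Im z * complex.Im w.
Proof. by case: z; case: w. Qed.

Lemma cImM (R : realType) (z w : R[i]) :
  complex.Im (z * w) = complex.Re z * complex.Im w + complex.Im z * complex.Re w.
Proof. by case: z => a b; case: w => c d /=. Qed.

Lemma cReD (R : realType) (z w : R[i]) : complex.Re (z + w) = complex.Re z + complex.Re w.
Proof. by case: z; case: w. Qed.
Lemma cImD (R : realType) (z w : R[i]) : complex.Im (z + w) = complex.Im z + complex.Im w.
Proof. by case: z; case: w. Qed.
Lemma cReN (R : realType) (z : R[i]) : complex.Re (- z) = - complex.Re z.
Proof. by case: z. Qed.
Lemma cImN (R : realType) (z : R[i]) : complex.Im (- z) = - complex.Im z.
Proof. by case: z. Qed.
Lemma cReJ (R : realType) (z : R[i]) : complex.Re (conjc z) = complex.Re z.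
Proof. by case: z. Qed.
Lemma cImJ (R : realType) (z : R[i]) : complex.Im (conjc z) = - complex.Im z.
Proof. by case: z. Qed.
Lemma cReC (R : realType) (r : R) : complex.Re (r%:C) = r.
Proof. by []. Qed.
Lemma cImC (R : realType) (r : R) : complex.Im (r%:C) = 0.
Proof. by []. Qed.
Lemma cmodC (R : realType) (r : R) : cmod (r%:C) = `|r|.
Proof. by rewrite /cmod /= expr0n /= addr0 sqrtr_sqr. Qed.
Lemma cmodJ (R : realType) (z : R[i]) : cmod (conjc z) = cmod z.
Proof. by rewrite /cmod cReJ cImJ sqrrN. Qed.

Lemma csqrt_sq (R : realType) (w : R[i]) : csqrt w ^+ 2 = w.
Proof.
case: w => x y.
set m := cmod (Complex x y).
have hm : m ^+ 2 = x ^+ 2 + y ^+ 2 by rewrite /m cmod_sq.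
have hm0 : 0 <= m by apply: cmod_ge0.
have hxm : `|x| <= m.
  have h3 := sqr_ge0 y. rewrite ler_norml; apply/andP; split; nra.
have hp : 0 <= (m + x) / 2.
  by apply: divr_ge0 => //; move: hxm; rewrite ler_norml; lra.
have hn : 0 <= (m - x) / 2.
  by apply: divr_ge0 => //; move: hxm; rewrite ler_norml; lra.
rewrite /csqrt -/m expr2 /=.
set s := (if 0 <= y then 1 else -1).
have hs : s ^+ 2 = 1 by rewrite /s; case: ifP => _; rewrite ?expr1n ?sqrrN ?expr1n.
have hsy : s * `|y| = y by rewrite /s; case: ifPn => h; [rewrite ger0_norm // mul1r | rewrite ltr0_norm ?mulN1r ?opprK // ltNge].
set a := Num.sqrt ((m + x) / 2).
set b := Num.sqrt ((m - x) / 2).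
have ha : a ^+ 2 = (m + x) / 2 by rewrite sqr_sqrtr.
have hb : b ^+ 2 = (m - x) / 2 by rewrite sqr_sqrtr.
have hab : a * b = `|y| / 2.
  have h0 : 0 <= a * b by rewrite mulr_ge0 // sqrtr_ge0.
  have hy0 : 0 <= `|y| / 2 by rewrite divr_ge0.
  have e : (a * b) ^+ 2 = (`|y| / 2) ^+ 2.
    rewrite exprMn ha hb expr_div_n (real_normK (num_real y)).
    have -> : y ^+ 2 = m ^+ 2 - x ^+ 2 by rewrite hm; ring.
    by field.
  by apply/eqP; rewrite -(eqrXn2 (n:=2)) // e.
simpc. congr (_ +i* _).

  have -> : a * a - s * b * (s * b) = a ^+ 2 - s ^+ 2 * b ^+ 2 by ring.
  by rewrite ha hb hs; field.
have -> : a * (s * b) + s * b * a = s * (a * b) * 2 by ring.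
rewrite hab; have -> : s * (`|y| / 2) * 2 = s * `|y| by field.
exact: hsy.
Qed.

Lemma det4f (F : comNzRingType) (f : nat -> nat -> F) (M : 'M[F]_4) :
  (forall i j, M i j = f i j) ->
  let d3 i1 i2 i3 j1 j2 j3 :=
    f i1 j1 * (f i2 j2 * f i3 j3 - f i2 j3 * f i3 j2)
  - f i1 j2 * (f i2 j1 * f i3 j3 - f i2 j3 * f i3 j1)
  + f i1 j3 * (f i2 j1 * f i3 j2 - f i2 j2 * f i3 j1) in
  \det M = f 0%N 0%N * d3 1%N 2%N 3%N 1%N 2%N 3%N - f 0%N 1%N * d3 1%N 2%N 3%N 0%N 2%N 3%N
  + f 0%N 2%N * d3 1%N 2%N 3%N 0%N 1%N 3%N - f 0%N 3%N * d3 1%N 2%N 3%N 0%N 1%N 2%N.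
Proof.
move=> E d3.
rewrite (expand_det_row _ ord0) !big_ord_recl big_ord0 /cofactor.
rewrite !(expand_det_row _ ord0) !big_ord_recl !big_ord0 /cofactor.
rewrite !(expand_det_row _ ord0) !big_ord_recl !big_ord0 /cofactor !det_mx11 !mxE !E /=.
rewrite /bump /= /d3. ring.
Qed.

Lemma alg_det (F : fieldType) (A Bp Bm lam up um rp rm : F) :
  up != 0 -> um != 0 ->
  Bp ^+ 2 = rp / up * lam + A ^+ 2 -> Bm ^+ 2 = rm / um * lam + A ^+ 2 ->
  let d3 (f : nat -> nat -> F) i1 i2 i3 j1 j2 j3 :=
    f i1 j1 * (f i2 j2 * f i3 j3 - f i2 j3 * f i3 j2)
  - f i1 j2 * (f i2 j1 * f i3 j3 - f i2 j3 * f i3 j1)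
  + f i1 j3 * (f i2 j1 * f i3 j2 - f i2 j2 * f i3 j1) in
  let rows := [:: [:: up * (Bp + A); up * (Bp ^+ 2 + A ^+ 2);
            - (um * (Bm + A)); - (um * (Bm ^+ 2 + A ^+ 2))];
        [:: up * (Bp - A); - (2 * up * A * Bp);
            um * (Bm - A); - (2 * um * A * Bm)];
        [:: 1; Bp; 1; Bm];
        [:: 0; 1; 0; -1] ] in
  let f i j := nth 0 (nth [::] rows i) j in
  f 0%N 0%N * d3 f 1%N 2%N 3%N 1%N 2%N 3%N - f 0%N 1%N * d3 f 1%N 2%N 3%N 0%N 2%N 3%N
  + f 0%N 2%N * d3 f 1%N 2%N 3%N 0%N 1%N 3%N - f 0%N 3%N * d3 f 1%N 2%N 3%N 0%N 1%N 2%N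
  = (rp + rm) * lam * ((up * Bp + um * A) + (um * Bm + up * A))
    + 4 * A * (up * Bp + um * A) * (um * Bm + up * A).
Proof.
move=> hu hm h1 h2 d3 rows f.
have e1 : rp * lam = up * (Bp ^+ 2 - A ^+ 2) by rewrite h1; field.
have e2 : rm * lam = um * (Bm ^+ 2 - A ^+ 2) by rewrite h2; field.
rewrite /f /d3 /=.
have -> : (rp + rm) * lam = up * (Bp ^+ 2 - A ^+ 2) + um * (Bm ^+ 2 - A ^+ 2) by rewrite mulrDl e1 e2.
ring.
Qed.

Lemma Re_ge_ncmod (R : realType) (z : R[i]) : - cmod z <= complex.Re z.
Proof.
have h1 := cmod_sq z; have h2 := cmod_ge0 z.
have h3 := sqr_ge0 (complex.Im z). nra.
Qed.

Lemma csqrt_Re (R : realType) (w : R[i]) :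
  complex.Re (csqrt w) = Num.sqrt ((cmod w + complex.Re w) / 2).
Proof. by case: w. Qed.

Lemma csqrt_Re_ge0 (R : realType) (w : R[i]) : 0 <= complex.Re (csqrt w).
Proof. by rewrite csqrt_Re sqrtr_ge0. Qed.

Lemma csqrt_Re2 (R : realType) (w : R[i]) :
  complex.Re (csqrt w) ^+ 2 = (cmod w + complex.Re w) / 2.
Proof.
rewrite csqrt_Re sqr_sqrtr //; apply: divr_ge0 => //.
by have := Re_ge_ncmod w; lra.
Qed.

Lemma cmod_csqrt2 (R : realType) (w : R[i]) : cmod (csqrt w) ^+ 2 = cmod w.
Proof. by rewrite expr2 -cmodM -expr2 csqrt_sq. Qed.

Lemma cmod_csqrt (R : realType) (w : R[i]) : cmod (csqrt w) = Num.sqrt (cmod w).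
Proof. by rewrite -(cmod_csqrt2 w) sqrtr_sqr ger0_norm // cmod_ge0. Qed.

Lemma mulcJ (R : realType) (z : R[i]) : z * conjc z = (cmod z ^+ 2)%:C.
Proof. by rewrite cmod_sq; case: z => a b; simpc; rewrite /= -!expr2; congr (_ +i* _); ring. Qed.

Definition sec (R : realType) (g : R[i]) (k : R) (z : R[i]) :=
  k * cmod z <= complex.Re (z * conjc g).

Lemma sec_add2 (R : realType) (g : R[i]) k z1 z2 : sec g k z1 -> sec g k z2 ->
  k * (cmod z1 + cmod z2) <= complex.Re ((z1 + z2) * conjc g).
Proof. by rewrite /sec mulrDl cReD mulrDr; apply: lerD. Qed.

Lemma sec_add (R : realType) (g : R[i]) k z1 z2 : 0 <= k -> sec g k z1 -> sec g k z2 ->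
  sec g k (z1 + z2).
Proof.
move=> k0 h1 h2; apply: le_trans (sec_add2 h1 h2).
by apply: ler_wpM2l => //; apply: cmodD.
Qed.

Lemma sec_scale (R : realType) (g : R[i]) k (r : R) z : 0 <= r -> sec g k z ->
  sec g k (r%:C * z).
Proof.
move=> r0 h; rewrite /sec cmodM cmodC ger0_norm // -mulrA cReM /= mul0r subr0 mulrCA.
exact: ler_wpM2l.
Qed.

Lemma sec_le (R : realType) (g : R[i]) k z : sec g k z -> k * cmod z <= cmod z * cmod g.
Proof. by move=> h; apply: le_trans h _; rewrite -(cmodJ g) -cmodM Re_le_cmod. Qed.

Lemma cmod_sqM (R : realType) (z w : R[i]) : cmod (z * w) ^+ 2 = cmod z ^+ 2 * cmod w ^+ 2.
Proof. by rewrite cmodM exprMn. Qed.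

Lemma sec_mul (R : realType) (g : R[i]) k z1 z2 : 0 <= k -> k ^+ 2 <= cmod g ^+ 2 ->
  sec g k z1 -> sec g k z2 -> sec (g * g) (2 * k ^+ 2 - cmod g ^+ 2) (z1 * z2).
Proof.
rewrite /sec => k0 kG h1 h2.
have -> : z1 * z2 * conjc (g * g) = (z1 * conjc g) * (z2 * conjc g) by rewrite rmorphM; ring.
rewrite cReM cmodM.
set p1 := z1 * conjc g; set p2 := z2 * conjc g.
have e1 : complex.Re p1 ^+ 2 + complex.Im p1 ^+ 2 = cmod z1 ^+ 2 * cmod g ^+ 2.
  by rewrite -cmod_sq /p1 cmod_sqM cmodJ.
have e2 : complex.Re p2 ^+ 2 + complex.Im p2 ^+ 2 = cmod z2 ^+ 2 * cmod g ^+ 2.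
  by rewrite -cmod_sq /p2 cmod_sqM cmodJ.
move: h1 h2 e1 e2; rewrite -/p1 -/p2.
set x1 := complex.Re p1; set x2 := complex.Re p2; set y1 := complex.Im p1; set y2 := complex.Im p2.
set n1 := cmod z1; set n2 := cmod z2; set G := cmod g ^+ 2.
have n10 : 0 <= n1 by apply: cmod_ge0.
have n20 : 0 <= n2 by apply: cmod_ge0.
move=> h1 h2 e1 e2.
have hx : k ^+ 2 * (n1 * n2) <= x1 * x2.
  have : k * n1 * (k * n2) <= x1 * x2 by apply: ler_pM => //; apply: mulr_ge0.
  by rewrite mulrACA -expr2.
have hy1 : y1 ^+ 2 <= (G - k ^+ 2) * n1 ^+ 2.
  have : (k * n1) ^+ 2 <= x1 ^+ 2 by have := mulr_ge0 k0 n10; nra.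
  rewrite exprMn; nra.
have hy2 : y2 ^+ 2 <= (G - k ^+ 2) * n2 ^+ 2.
  have : (k * n2) ^+ 2 <= x2 ^+ 2 by have := mulr_ge0 k0 n20; nra.
  rewrite exprMn; nra.
have hc : 0 <= G - k ^+ 2 by rewrite subr_ge0.
have hyy : (y1 * y2) ^+ 2 <= ((G - k ^+ 2) * (n1 * n2)) ^+ 2.
  rewrite !exprMn.
  have -> : (G - k ^+ 2) ^+ 2 * (n1 ^+ 2 * n2 ^+ 2) = ((G - k ^+ 2) * n1 ^+ 2) * ((G - k ^+ 2) * n2 ^+ 2) by ring.
  by apply: ler_pM => //; apply: sqr_ge0.
have hyy' : y1 * y2 <= (G - k ^+ 2) * (n1 * n2).
  have h0 : 0 <= (G - k ^+ 2) * (n1 * n2) by rewrite !mulr_ge0.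
  nra.
nra.
Qed.

Lemma sec_sqrt (R : realType) (g : R[i]) k r : 0 <= k ->
  sec (g * g) (2 * k ^+ 2 - cmod g ^+ 2) (r * r) ->
  k * cmod r <= `| complex.Re (r * conjc g) |.
Proof.
rewrite /sec => k0.
have -> : r * r * conjc (g * g) = (r * conjc g) * (r * conjc g) by rewrite rmorphM; ring.
rewrite cReM cmodM.
have e1 : complex.Re (r * conjc g) ^+ 2 + complex.Im (r * conjc g) ^+ 2 = cmod r ^+ 2 * cmod g ^+ 2.
  by rewrite -cmod_sq cmod_sqM cmodJ.
move: e1; set x := complex.Re _; set y := complex.Im _; set n := cmod r; set G := cmod g ^+ 2.
have n0 : 0 <= n by apply: cmod_ge0.
move=> e1 h.
have hx : (k * n) ^+ 2 <= x ^+ 2 by rewrite exprMn; nra.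
rewrite -[x ^+ 2](real_normK (num_real x)) in hx.
by rewrite -(ler_pXn2r (n:=2)) // nnegrE ?mulr_ge0.
Qed.

Lemma cReMC (R : realType) (w : R[i]) (r : R) : complex.Re (w * r%:C) = complex.Re w * r.
Proof. by case: w => a b /=; rewrite mulr0 subr0. Qed.

Lemma cReCM (R : realType) (w : R[i]) (r : R) : complex.Re (r%:C * w) = r * complex.Re w.
Proof. by case: w => a b /=; rewrite mul0r subr0. Qed.

Lemma sec_inv (R : realType) (g : R[i]) k z : sec g k z -> sec (conjc g) k (z ^-1).
Proof.
move=> h.
have [z0|z0] := eqVneq z 0; first by rewrite z0 invr0 /sec !mul0r /= cmodC normr0 mulr0.
rewrite /sec conjcK cmodV.
have cz : cmod z != 0 by rewrite cmod_eq0.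
have cp : 0 < cmod z by rewrite lt_def cz cmod_ge0.
have -> : z ^-1 = conjc z * ((cmod z ^+ 2)^-1)%:C.
  rewrite fmorphV /= -mulcJ invfM mulrCA mulfV ?mulr1 //.
  by rewrite conjc_eq0.
rewrite mulrAC cReMC.
have -> : complex.Re (conjc z * g) = complex.Re (z * conjc g).
  by case: z {h z0 cz cp} => a b; case: g => c d /=; ring.
have -> : k / cmod z = (k * cmod z) * ((cmod z)^-1 * (cmod z)^-1) by field.
rewrite expr2 invfM; apply: ler_wpM2r => //.
by rewrite mulr_ge0 // invr_ge0 ltW.
Qed.

Lemma sec_pos (R : realType) (g : R[i]) k z : 0 < k -> k ^+ 2 <= cmod g ^+ 2 ->
  0 < complex.Re g -> complex.Im g ^+ 2 < k ^+ 2 -> sec g k z -> z != 0 ->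
  0 < complex.Re z.
Proof.
move=> k0 kG g1p g2k h z0.
have n0 : 0 < cmod z by rewrite lt_def cmod_eq0 z0 cmod_ge0.
have e : complex.Re z * cmod g ^+ 2 = complex.Re (z * conjc g) * complex.Re g
    - complex.Im (z * conjc g) * complex.Im g.
  by rewrite -cReM -mulrA [conjc g * g]mulrC mulcJ cReMC.
have e1 : complex.Re (z * conjc g) ^+ 2 + complex.Im (z * conjc g) ^+ 2 = cmod z ^+ 2 * cmod g ^+ 2.
  by rewrite -cmod_sq cmod_sqM cmodJ.
move: h e e1 kG n0; rewrite /sec (cmod_sq g).
set x := complex.Re (z * conjc g); set y := complex.Im (z * conjc g).
set n := cmod z; set g1 := complex.Re g; set g2 := complex.Im g.
move=> h e e1 kG n0.
have G0 : 0 < g1 ^+ 2 + g2 ^+ 2 by have := sqr_ge0 g2; nra.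
have hy : y ^+ 2 <= (g1 ^+ 2 + g2 ^+ 2 - k ^+ 2) * n ^+ 2.
  have : (k * n) ^+ 2 <= x ^+ 2 by have := mulr_gt0 k0 n0; nra.
  rewrite exprMn; nra.
have hlt : (g1 ^+ 2 + g2 ^+ 2 - k ^+ 2) * g2 ^+ 2 < k ^+ 2 * g1 ^+ 2.
  have : (g1 ^+ 2 + g2 ^+ 2) * (g2 ^+ 2 - k ^+ 2) < 0 by rewrite pmulr_rlt0 // subr_lt0.
  nra.
have hx : k * n * g1 <= x * g1 by rewrite ler_pM2r.
have hkn : 0 < k * n * g1 by rewrite !mulr_gt0.
have hyg : (y * g2) ^+ 2 < (x * g1) ^+ 2.
  apply: (le_lt_trans (y := (g1 ^+ 2 + g2 ^+ 2 - k ^+ 2) * n ^+ 2 * g2 ^+ 2)).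
    by rewrite exprMn ler_wpM2r // sqr_ge0.
  apply: (lt_le_trans (y := (k * n * g1) ^+ 2)).
    rewrite !exprMn; have := mulr_gt0 n0 n0; rewrite -expr2 => nn; nra.
  by rewrite ler_pXn2r // ?nnegrE ltW // (lt_le_trans hkn).
have : y * g2 < x * g1.
  have hxg : 0 < x * g1 by apply: lt_le_trans hx.
  nra.
move=> hh.
have : 0 < complex.Re z * (g1 ^+ 2 + g2 ^+ 2) by rewrite e; lra.
by rewrite pmulr_lgt0.
Qed.

Lemma frame (R : realType) (a1 s1 : R[i]) : cmod a1 = 1 -> cmod s1 = 1 ->
  0 < complex.Re a1 -> 0 < complex.Re s1 ->
  [/\ cmod (a1 + s1) ^+ 2 = 2 + 2 * complex.Re (a1 * conjc s1),
      (1 + complex.Re (a1 * conjc s1)) ^+ 2 <= cmod (a1 + s1) ^+ 2,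
      0 < complex.Re (a1 + s1),
      complex.Im (a1 + s1) ^+ 2 < (1 + complex.Re (a1 * conjc s1)) ^+ 2 &
      forall r, 0 <= r -> sec (a1 + s1) (1 + complex.Re (a1 * conjc s1)) (r%:C * a1)
                       /\ sec (a1 + s1) (1 + complex.Re (a1 * conjc s1)) (r%:C * s1)].
Proof.
move=> ha hs.
have ha2 : cmod a1 ^+ 2 = 1 by rewrite ha expr1n.
have hs2 : cmod s1 ^+ 2 = 1 by rewrite hs expr1n.
rewrite /sec; move: ha2 hs2; rewrite !cmod_sq.
case: a1 {ha} => x1 y1; case: s1 {hs} => x2 y2 /= h1 h2 hx1 hx2.
simpc.
have hy1 : y1 ^+ 2 <= 1 by have := sqr_ge0 x1; lra.
have hy2 : y2 ^+ 2 <= 1 by have := sqr_ge0 x2; lra.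
split.
- nra.
- have : (x1 * x2 + y1 * y2) ^+ 2 <= 1.
    have -> : 1 = (x1 ^+ 2 + y1 ^+ 2) * (x2 ^+ 2 + y2 ^+ 2) by rewrite h1 h2 mulr1.
    have := sqr_ge0 (x1 * y2 - x2 * y1); nra.
  nra.
- lra.
- have p1 : 0 < (1 - y1) * (1 - y2) + x1 * x2.
    have : 0 <= (1 - y1) * (1 - y2); last by have := mulr_gt0 hx1 hx2; lra.
    apply: mulr_ge0; nra.
  have p2 : 0 < (1 + y1) * (1 + y2) + x1 * x2.
    have : 0 <= (1 + y1) * (1 + y2); last by have := mulr_gt0 hx1 hx2; lra.
    apply: mulr_ge0; nra.
  have : 0 < ((1 - y1) * (1 - y2) + x1 * x2) * ((1 + y1) * (1 + y2) + x1 * x2) by apply: mulr_gt0.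
  have -> : ((1 - y1) * (1 - y2) + x1 * x2) * ((1 + y1) * (1 + y2) + x1 * x2)
    = (1 + (x1 * x2 + y1 * y2)) ^+ 2 - (y1 + y2) ^+ 2 by ring.
  lra.
- move=> r r0; rewrite !cmodM !cmodC ger0_norm // /cmod /= h1 h2 sqrtr1 !mulr1.
  have e1 : r * (x1 ^+ 2 + y1 ^+ 2) = r by rewrite h1 mulr1.
  have e2 : r * (x2 ^+ 2 + y2 ^+ 2) = r by rewrite h2 mulr1.
  split; nra.
Qed.

Lemma cmodN (R : realType) (z : R[i]) : cmod (- z) = cmod z.
Proof. by rewrite /cmod cReN cImN !sqrrN. Qed.

Lemma cmodCM (R : realType) (r : R) (z : R[i]) : 0 <= r -> cmod (r%:C * z) = r * cmod z.
Proof. by move=> r0; rewrite cmodM cmodC ger0_norm. Qed.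

Lemma Re_le_cmodM (R : realType) (z g : R[i]) : complex.Re (z * conjc g) <= cmod z * cmod g.
Proof. by rewrite -(cmodJ g) -cmodM Re_le_cmod. Qed.

Lemma core1 (R : realType) (a1 s1 Bp Bm A lam X Y : R[i]) (rA rs u v a b : R) :
  cmod a1 = 1 -> cmod s1 = 1 -> 0 < complex.Re a1 -> 0 < complex.Re s1 ->
  0 < complex.Re (a1 * conjc s1) ->
  0 < rA -> 0 < rs -> 0 < u -> 0 < v -> 0 < a -> 0 < b ->
  A = rA%:C * a1 -> lam = (rs%:C * s1) * (rs%:C * s1) ->
  Bp ^+ 2 = a%:C * lam + A ^+ 2 -> 0 <= complex.Re Bp ->
  Bm ^+ 2 = b%:C * lam + A ^+ 2 -> 0 <= complex.Re Bm ->
  X = u%:C * Bp + v%:C * A -> Y = v%:C * Bm + u%:C * A ->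
  [/\ u * cmod Bp <= cmod X * 2, v * cmod Bm <= cmod Y * 2,
      complex.Re (a1 * conjc s1) * (a * cmod lam + rA ^+ 2) <= cmod Bp ^+ 2,
      complex.Re (a1 * conjc s1) * (b * cmod lam + rA ^+ 2) <= cmod Bm ^+ 2 &
      complex.Re (a1 * conjc s1) * ((u * a + v * b) * cmod lam * (cmod X + cmod Y)
         + 4 * rA * (cmod X * cmod Y))
      <= cmod ((u * a + v * b)%:C * lam * (X + Y) + 4 * A * X * Y) * 2].
Proof.
move=> ha hs hra hrs c0p rA0 rs0 u0 v0 a0 b0 eA elam eBp rBp eBm rBm eX eY.
set c0 := complex.Re (a1 * conjc s1) in c0p *.
have [hG hkG hg1 hg2 hsec] := frame ha hs hra hrs.
move: hG hkG hg1 hg2 hsec; rewrite -/c0.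
set g := a1 + s1; set k := 1 + c0 => hG hkG hg1 hg2 hsec.
have k0 : 0 < k by rewrite /k; lra.
have k1 : 1 <= k by rewrite /k; lra.
have c01 : c0 <= 1 by rewrite hG /k in hkG; nra.
have gle2 : cmod g <= 2.
  have : cmod g ^+ 2 <= 2 ^+ 2 by rewrite hG; lra.
  by rewrite ler_pXn2r // ?nnegrE ?cmod_ge0.
set k2 := 2 * k ^+ 2 - cmod g ^+ 2.
have ek2 : k2 = c0 * cmod g ^+ 2 by rewrite /k2 hG /k; ring.
have k2p : 0 < k2 by rewrite ek2 mulr_gt0 // hG; lra.
have Gp : 0 < cmod g ^+ 2 by rewrite hG; lra.
have secA : sec g k A by rewrite eA; case: (hsec rA (ltW rA0)).
have secS : sec g k (rs%:C * s1) by case: (hsec rs (ltW rs0)).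
have nA : cmod A = rA by rewrite eA cmodCM ?ltW // ha mulr1.
have sec2L : sec (g * g) k2 lam by rewrite elam; apply: sec_mul => //; lra.
have sec2A : sec (g * g) k2 (A * A) by apply: sec_mul => //; lra.
have cmodgg : cmod (g * g) = cmod g ^+ 2 by rewrite cmodM expr2.
have sqbound : forall (c : R) (B : R[i]), 0 < c -> B ^+ 2 = c%:C * lam + A ^+ 2 ->
    0 <= complex.Re B -> c0 * (c * cmod lam + rA ^+ 2) <= cmod B ^+ 2 /\ sec g k B.
  move=> c B c0' eB rB.
  have eBB : B * B = c%:C * lam + A * A by rewrite -[B * B]expr2 eB expr2.
  have sw : sec (g * g) k2 (B * B).
    by rewrite eBB; apply: sec_add; [lra|apply: sec_scale => //; lra|].
  have lw : k2 * (c * cmod lam + rA ^+ 2) <= cmod (B * B) * cmod g ^+ 2.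
    have h := sec_add2 (sec_scale (ltW c0') sec2L) sec2A.
    rewrite -eBB !cmodM cmodC (ger0_norm (ltW c0')) nA -[rA * rA]expr2 in h.
    apply: le_trans h _; rewrite -cmodgg; exact: Re_le_cmodM.
  have hB : c0 * (c * cmod lam + rA ^+ 2) <= cmod B ^+ 2.
    rewrite ek2 cmodM -expr2 in lw.
    by rewrite -(ler_pM2r Gp) mulrAC.
  split => //.
  have hs2 := sec_sqrt (ltW k0) sw.
  have Bn0 : B != 0.
    apply/eqP => B0.
    have cB : cmod B = 0 by apply/eqP; rewrite cmod_eq0 B0.
    move: hB; rewrite cB expr0n /=.
    have : 0 < c0 * (c * cmod lam + rA ^+ 2).
      apply: mulr_gt0 => //; have := mulr_ge0 (ltW c0') (cmod_ge0 lam).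
      have := mulr_gt0 rA0 rA0; rewrite -expr2; lra.
    lra.
  have [hpos|hneg] := lerP 0 (complex.Re (B * conjc g)).
    by rewrite ger0_norm in hs2.
  rewrite ltr0_norm // in hs2.
  have snB : sec g k (- B) by rewrite /sec cmodN mulNr cReN.
  have := sec_pos k0 hkG hg1 hg2 snB; rewrite oppr_eq0 cReN => /(_ Bn0).
  lra.
have [hBp secBp] := sqbound a Bp a0 eBp rBp.
have [hBm secBm] := sqbound b Bm b0 eBm rBm.
have posB : forall (c : R) (B : R[i]), 0 < c -> c0 * (c * cmod lam + rA ^+ 2) <= cmod B ^+ 2 ->
    0 < cmod B.
  move=> c B c0' hB.
  have : 0 < c0 * (c * cmod lam + rA ^+ 2).
    apply: mulr_gt0 => //; have := mulr_ge0 (ltW c0') (cmod_ge0 lam).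
    have := mulr_gt0 rA0 rA0; rewrite -expr2; lra.
  have := cmod_ge0 B; nra.
have pBp := posB a Bp a0 hBp.
have pBm := posB b Bm b0 hBm.
have lowX : k * (u * cmod Bp + v * rA) <= cmod X * 2.
  have h := sec_add2 (sec_scale (ltW u0) secBp) (sec_scale (ltW v0) secA).
  rewrite -eX (@cmodCM _ u Bp (ltW u0)) (@cmodCM _ v A (ltW v0)) nA in h.
  apply: le_trans h _; apply: le_trans (Re_le_cmodM _ _) _.
  by apply: ler_wpM2l => //; apply: cmod_ge0.
have lowY : k * (v * cmod Bm + u * rA) <= cmod Y * 2.
  have h := sec_add2 (sec_scale (ltW v0) secBm) (sec_scale (ltW u0) secA).
  rewrite -eY (@cmodCM _ v Bm (ltW v0)) (@cmodCM _ u A (ltW u0)) nA in h.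
  apply: le_trans h _; apply: le_trans (Re_le_cmodM _ _) _.
  by apply: ler_wpM2l => //; apply: cmod_ge0.
have hX : u * cmod Bp <= cmod X * 2.
  apply: le_trans lowX; have := mulr_gt0 v0 rA0; have := mulr_gt0 u0 pBp; nra.
have hY : v * cmod Bm <= cmod Y * 2.
  apply: le_trans lowY; have := mulr_gt0 u0 rA0; have := mulr_gt0 v0 pBm; nra.
have pX : 0 < cmod X by have := mulr_gt0 u0 pBp; lra.
have pY : 0 < cmod Y by have := mulr_gt0 v0 pBm; lra.
have X0 : X != 0 by rewrite -cmod_eq0 gt_eqF.
have Y0 : Y != 0 by rewrite -cmod_eq0 gt_eqF.
have secX : sec g k X.
  by rewrite eX; apply: sec_add; [lra|apply: sec_scale => //; lra|apply: sec_scale => //; lra].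
have secY : sec g k Y.
  by rewrite eY; apply: sec_add; [lra|apply: sec_scale => //; lra|apply: sec_scale => //; lra].
have lowXY : cmod X + cmod Y <= cmod (X + Y) * 2.
  have h := sec_add2 secX secY.
  have : k * (cmod X + cmod Y) <= cmod (X + Y) * 2.
    apply: le_trans h _; apply: le_trans (Re_le_cmodM _ _) _.
    by apply: ler_wpM2l => //; apply: cmod_ge0.
  nra.
have XY0 : X + Y != 0.
  by rewrite -cmod_eq0 gt_eqF //; lra.
set H := X * Y / (X + Y).
have eH : H = (X^-1 + Y^-1)^-1.
  rewrite /H; have XYi : X^-1 + Y^-1 = (X + Y) / (X * Y) by field; rewrite X0 Y0.
  by rewrite XYi invf_div.
have secH : sec g k H.
  have := sec_inv (sec_add (ltW k0) (sec_inv secX) (sec_inv secY)).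
  by rewrite conjcK -eH.
have secAH : sec (g * g) k2 (A * H) by apply: sec_mul => //; lra.
set Z := (u * a + v * b)%:C * lam + (4 : R)%:C * (A * H).
have rho0 : 0 < u * a + v * b by have := mulr_gt0 u0 a0; have := mulr_gt0 v0 b0; lra.
have lowZ : c0 * ((u * a + v * b) * cmod lam + 4 * (rA * cmod H)) <= cmod Z.
  have h := sec_add2 (sec_scale (ltW rho0) sec2L) (sec_scale (ler0n _ 4) secAH).
  rewrite (@cmodCM _ _ lam (ltW rho0)) (@cmodCM _ 4 (A * H) (ler0n _ 4)) cmodM nA -/Z in h.
  have h2 := le_trans h (Re_le_cmodM Z (g * g)).
  rewrite ek2 mulrAC cmodgg in h2.
  by rewrite -(ler_pM2r Gp).
have eD : (u * a + v * b)%:C * lam * (X + Y) + 4 * A * X * Y = (X + Y) * Z.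
  have e4 : (4 : R)%:C = 4 by rewrite rmorph_nat.
  rewrite /Z /H e4; field; rewrite ?XY0 ?X0 ?Y0 //.
have eHm : cmod H * cmod (X + Y) = cmod X * cmod Y.
  rewrite -!cmodM; congr cmod; rewrite /H; field; rewrite ?XY0 ?X0 ?Y0 //.
rewrite eD cmodM.
have pZ : 0 <= c0 * ((u * a + v * b) * cmod lam + 4 * (rA * cmod H)).
  apply: mulr_ge0; first lra.
  have := mulr_ge0 (ltW rho0) (cmod_ge0 lam); have := mulr_ge0 (ltW rA0) (cmod_ge0 H); lra.
have w1 : c0 * ((u * a + v * b) * cmod lam + 4 * (rA * cmod H)) * (cmod X + cmod Y)
     <= cmod Z * (cmod (X + Y) * 2).
  apply: ler_pM => //; have := cmod_ge0 X; have := cmod_ge0 Y; lra.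
have w2 : cmod X * cmod Y <= cmod H * (cmod X + cmod Y).
  by rewrite -eHm; apply: ler_wpM2l; [apply: cmod_ge0|apply: cmodD].
have w3 : 0 <= c0 * rA * (cmod H * (cmod X + cmod Y) - cmod X * cmod Y).
  apply: mulr_ge0; [apply: mulr_ge0; lra|lra].
split => //.
have e : cmod (X + Y) * cmod Z * 2 = cmod Z * (cmod (X + Y) * 2) by ring.
rewrite e; apply: le_trans w1; nra.
Qed.

Lemma sq_le (R : realType) (x y : R) : 0 <= y -> x ^+ 2 <= y ^+ 2 -> x <= y.
Proof. move=> y0 h; nra. Qed.

Lemma core2 (R : realType) (L rA nBp nBm nX nY nD c0 cm u v a b : R) :
  0 <= L -> 0 < rA -> 0 <= nBp -> 0 <= nBm -> 0 <= nX -> 0 <= nY ->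
  0 < u -> 0 < v -> 0 < a -> 0 < b -> 0 < cm -> cm <= c0 ->
  u * nBp <= nX * 2 -> v * nBm <= nY * 2 ->
  c0 * (a * L + rA ^+ 2) <= nBp ^+ 2 -> c0 * (b * L + rA ^+ 2) <= nBm ^+ 2 ->
  c0 * ((u * a + v * b) * L * (nX + nY) + 4 * rA * (nX * nY)) <= nD * 2 ->
  cm * Num.min ((u * a + v * b) * Num.sqrt (cm * Num.min (Num.min a b) 1 * Num.min u v ^+ 2 / 4))
     (2 * Num.sqrt (cm * Num.min (Num.min a b) 1 * Num.min u v ^+ 2 / 4) ^+ 2)
   * ((L + rA ^+ 2) * Num.sqrt (L + rA ^+ 2)) <= nD.
Proof.
move=> L0 rA0 nBp0 nBm0 nX0 nY0 u0 v0 a0 b0 cm0 cmc0 hX hY hBp hBm hD.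
set m1 := Num.min (Num.min a b) 1.
set mn := Num.min u v.
set m := cm * m1 * mn ^+ 2 / 4.
set al := Num.sqrt m.
set Q := L + rA ^+ 2.
set sQ := Num.sqrt Q.
set rho := u * a + v * b.
have m1p : 0 < m1 by rewrite /m1 !lt_min a0 b0 ltr01.
have m1a : m1 <= a by rewrite /m1 !ge_min lexx.
have m1b : m1 <= b by rewrite /m1 !ge_min lexx orbT.
have m11 : m1 <= 1 by rewrite /m1 ge_min lexx orbT.
have mnp : 0 < mn by rewrite /mn lt_min u0 v0.
have mnu : mn <= u by rewrite /mn ge_min lexx.
have mnv : mn <= v by rewrite /mn ge_min lexx orbT.
have Qp : 0 < Q by rewrite /Q; have := mulr_gt0 rA0 rA0; rewrite -expr2; lra.
have m0 : 0 <= m by rewrite /m !mulr_ge0 ?invr_ge0 // ?ltW // sqr_ge0.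
have al0 : 0 <= al by apply: sqrtr_ge0.
have al2 : al ^+ 2 = m by rewrite sqr_sqrtr.
have sQ0 : 0 <= sQ by apply: sqrtr_ge0.
have sQ2 : sQ ^+ 2 = Q by rewrite sqr_sqrtr // ltW.
have sQrA : rA <= sQ.
  apply: sq_le => //; rewrite sQ2 /Q; lra.
have c0p : 0 < c0 by lra.
have hQa : cm * m1 * Q <= c0 * (a * L + rA ^+ 2).
  have h1 : m1 * Q <= a * L + rA ^+ 2.
    rewrite /Q mulrDr; apply: lerD; first by apply: ler_wpM2r.
    have := sqr_ge0 rA; nra.
  rewrite -mulrA; apply: ler_pM => //; [lra|apply: mulr_ge0; lra].
have hQb : cm * m1 * Q <= c0 * (b * L + rA ^+ 2).
  have h1 : m1 * Q <= b * L + rA ^+ 2.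
    rewrite /Q mulrDr; apply: lerD; first by apply: ler_wpM2r.
    have := sqr_ge0 rA; nra.
  rewrite -mulrA; apply: ler_pM => //; [lra|apply: mulr_ge0; lra].
have hQ0 : 0 <= cm * m1 * Q by rewrite !mulr_ge0 // ltW.
have bX : al * sQ <= nX.
  apply: sq_le => //; rewrite exprMn al2 sQ2 /m.
  have h1 : (u * nBp) ^+ 2 <= (nX * 2) ^+ 2 by have := mulr_ge0 (ltW u0) nBp0; nra.
  have h2 : mn ^+ 2 <= u ^+ 2 by nra.
  have h3 : mn ^+ 2 * (cm * m1 * Q) <= u ^+ 2 * nBp ^+ 2.
    apply: ler_pM => //; [apply: sqr_ge0 | lra].
  rewrite exprMn in h1.
  have -> : cm * m1 * mn ^+ 2 / 4 * Q = mn ^+ 2 * (cm * m1 * Q) / 4 by ring.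
  rewrite ler_pdivrMr //; lra.
have bY : al * sQ <= nY.
  apply: sq_le => //; rewrite exprMn al2 sQ2 /m.
  have h1 : (v * nBm) ^+ 2 <= (nY * 2) ^+ 2 by have := mulr_ge0 (ltW v0) nBm0; nra.
  have h2 : mn ^+ 2 <= v ^+ 2 by nra.
  have h3 : mn ^+ 2 * (cm * m1 * Q) <= v ^+ 2 * nBm ^+ 2.
    apply: ler_pM => //; [apply: sqr_ge0 | lra].
  rewrite exprMn in h1.
  have -> : cm * m1 * mn ^+ 2 / 4 * Q = mn ^+ 2 * (cm * m1 * Q) / 4 by ring.
  rewrite ler_pdivrMr //; lra.
have rho0 : 0 < rho by rewrite /rho; have := mulr_gt0 u0 a0; have := mulr_gt0 v0 b0; lra.
have asq0 : 0 <= al * sQ by apply: mulr_ge0.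
have S1 : rho * L * (2 * (al * sQ)) + 4 * rA * ((al * sQ) * (al * sQ))
     <= rho * L * (nX + nY) + 4 * rA * (nX * nY).
  apply: lerD.
    apply: ler_wpM2l; [apply: mulr_ge0; lra | lra].
  apply: ler_wpM2l; [apply: mulr_ge0; lra | apply: ler_pM => //].
have S0 : 0 <= rho * L * (2 * (al * sQ)) + 4 * rA * ((al * sQ) * (al * sQ)).
  apply: addr_ge0; apply: mulr_ge0; try apply: mulr_ge0; try lra; apply: mulr_ge0 => //.
have S2 : cm * (rho * L * (2 * (al * sQ)) + 4 * rA * ((al * sQ) * (al * sQ))) <= nD * 2.
  apply: le_trans hD; apply: ler_pM => //; lra.
have S3 : rA ^+ 2 * sQ <= rA * Q.
  have h : 0 <= rA * sQ * (sQ - rA) by apply: mulr_ge0; [apply: mulr_ge0; lra|lra].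
  rewrite -sQ2; nra.
set mm := Num.min (rho * al) (2 * al ^+ 2).
have mm1 : mm <= rho * al by rewrite /mm ge_min lexx.
have mm2 : mm <= 2 * al ^+ 2 by rewrite /mm ge_min lexx orbT.
have mm0 : 0 <= mm by rewrite /mm le_min !mulr_ge0 // ?sqr_ge0 ?ltW.
have S4 : mm * (Q * sQ) * 2 <= rho * L * (2 * (al * sQ)) + 4 * rA * ((al * sQ) * (al * sQ)).
  have -> : rho * L * (2 * (al * sQ)) + 4 * rA * ((al * sQ) * (al * sQ))
     = 2 * sQ * (rho * al * L) + 2 * (2 * al ^+ 2) * (rA * Q) by rewrite -sQ2; ring.
  have T1 : mm * L <= rho * al * L by apply: ler_wpM2r.
  have T2 : mm * (rA ^+ 2 * sQ) <= 2 * al ^+ 2 * (rA * Q).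
    apply: ler_pM => //; [apply: mulr_ge0 => //; apply: sqr_ge0].
  have -> : mm * (Q * sQ) * 2 = 2 * sQ * (mm * L) + 2 * (mm * (rA ^+ 2 * sQ)) by rewrite /Q; ring.
  apply: lerD; first by apply: ler_wpM2l => //; apply: mulr_ge0.
  lra.
have : cm * (mm * (Q * sQ)) * 2 <= nD * 2.
  apply: le_trans S2; rewrite -mulrA; apply: ler_wpM2l; lra.
rewrite mulrA; lra.
Qed.

Lemma cos_pi_sub (R : realType) (x : R) : cos (pi - x) = - cos x.
Proof. by rewrite addrC cosDpi cosN. Qed.

Lemma cos_lt_of (R : realType) (x y : R) : 0 <= x -> y <= pi -> x < y -> cos y < cos x.
Proof.
move=> x0 ypi xy.
have hx : x \in `[0, pi] by rewrite in_itv /= x0 (ltW (lt_le_trans xy ypi)).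
have hy : y \in `[0, pi] by rewrite in_itv /= ypi (ltW (le_lt_trans x0 xy)).
by rewrite (ltr_cos hx hy).
Qed.

Lemma polar_Re (R : realType) (z : R[i]) (P : R -> Prop) :
  polar_arg z P -> exists theta, [/\ - pi < theta <= pi,
     complex.Re z = cmod z * cos theta, complex.Im z = cmod z * sin theta & P theta].
Proof.
case=> t [ht e pt]; exists t; split => //; by rewrite {1}e.
Qed.

Lemma Sigma_Re (R : realType) (eps : R) (lam : R[i]) : 0 < eps -> eps < pi ->
  Sigma eps lam -> lam != 0 /\ - cos eps * cmod lam <= complex.Re lam.
Proof.
move=> e0 epi [l0 hp]; split => //.
have [t [/andP [t1 t2] eRe _ ht]] := polar_Re hp.
rewrite eRe [cmod lam * _]mulrC; apply: ler_wpM2r; first exact: cmod_ge0.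
rewrite -cos_pi_sub -(cos_norm t); apply: ltW; apply: cos_lt_of; [exact: normr_ge0 | lra | exact: ht].
Qed.

Lemma tSigma_Re (R : realType) (eta : R) (z : R[i]) : 0 < eta -> eta < pi / 2 ->
  tSigma eta z -> z != 0 /\ cos eta * cmod z <= `|complex.Re z|.
Proof.
move=> e0 epi2 [z0 hp]; split => //.
have pi0 := pi_gt0 R.
have epi : eta < pi by lra.
have ce : 0 < cos eta by apply: cos_gt0_pihalf; apply/andP; split; lra.
have [t [/andP [t1 t2] eRe _ ht]] := polar_Re hp.
rewrite eRe normrM (ger0_norm (cmod_ge0 z)) [cmod z * _]mulrC; apply: ler_wpM2r; first exact: cmod_ge0.
have tpi : `|t| <= pi by rewrite ler_norml t2 andbT ltW.
case: ht => ht.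
  rewrite -(cos_norm t); apply: le_trans _ (ler_norm _); apply: ltW.
  apply: cos_lt_of; [exact: normr_ge0 | lra | exact: ht].
rewrite -(cos_norm t).
have : cos `|t| < cos (pi - eta).
  apply: cos_lt_of; [lra | exact: tpi | exact: ht].
rewrite cos_pi_sub => h.
rewrite ltr0_norm; first lra.
lra.
Qed.

Lemma Re_sum (R : realType) m (f : 'I_m -> R[i]) :
  complex.Re (\sum_(j < m) f j) = \sum_(j < m) complex.Re (f j).
Proof.
elim: m f => [|m IH] f; first by rewrite !big_ord0.
by rewrite !big_ord_recr /= cReD IH.
Qed.

Lemma cmod_sum (R : realType) m (f : 'I_m -> R[i]) :
  cmod (\sum_(j < m) f j) <= \sum_(j < m) cmod (f j).
Proof.
elim: m f => [|m IH] f; first by rewrite !big_ord0 cmodC normr0.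
rewrite !big_ord_recr /=; apply: le_trans (cmodD _ _) _.
by apply: lerD => //.
Qed.

Lemma Re_sq_ge (R : realType) (c : R) (z : R[i]) : 0 <= c -> c * cmod z <= `|complex.Re z| ->
  (2 * c ^+ 2 - 1) * cmod z ^+ 2 <= complex.Re (z ^+ 2).
Proof.
move=> c0 h; rewrite expr2 cReM -!expr2.
have e := cmod_sq z.
have h2 : (c * cmod z) ^+ 2 <= complex.Re z ^+ 2.
  rewrite -(real_normK (num_real (complex.Re z))).
  have := mulr_ge0 c0 (cmod_ge0 z); nra.
rewrite exprMn in h2; nra.
Qed.

Lemma S_facts (R : realType) (n : nat) (eta : R) (xi : 'I_n.-1 -> R[i]) :
  (2 <= n)%N -> 0 < eta -> eta < pi / 2 -> (forall j, tSigma eta (xi j)) ->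
  let S := \sum_(j < n.-1) xi j ^+ 2 in
  [/\ (2 * cos eta ^+ 2 - 1) * tildeA xi ^+ 2 <= complex.Re S,
      cmod S <= tildeA xi ^+ 2 & 0 < tildeA xi].
Proof.
move=> n2 e0 epi hx S.
have pi0 := pi_gt0 R.
have ce : 0 < cos eta by apply: cos_gt0_pihalf; apply/andP; split; lra.
have T2 : tildeA xi ^+ 2 = \sum_(j < n.-1) cmod (xi j) ^+ 2.
  rewrite /tildeA sqr_sqrtr //; apply: sumr_ge0 => j _; exact: sqr_ge0.
rewrite T2; split.
- rewrite /S Re_sum mulr_sumr; apply: ler_sum => j _.
  have [_ h] := tSigma_Re e0 epi (hx j).
  by apply: Re_sq_ge => //; apply: ltW.
- apply: le_trans (cmod_sum _) _; apply: ler_sum => j _.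
  by rewrite expr2 cmodM -expr2.
- have n1 : (0 < n.-1)%N by move: n2; case: (n) => [|[|k]].
  set j0 := Ordinal n1.
  have [x0 _] := tSigma_Re e0 epi (hx j0).
  have p0 : 0 < cmod (xi j0) ^+ 2.
    by rewrite exprn_gt0 // lt_def cmod_eq0 x0 cmod_ge0.
  rewrite /tildeA sqrtr_gt0 (bigD1 j0) //=.
  apply: lt_le_trans p0 _; rewrite lerDl; apply: sumr_ge0 => j _; exact: sqr_ge0.
Qed.

Lemma csqrt_unit (R : realType) (w : R[i]) (k : R) : w != 0 -> k * cmod w <= complex.Re w ->
  [/\ 0 < cmod (csqrt w), cmod ((cmod (csqrt w))^-1%:C * csqrt w) = 1,
      csqrt w = (cmod (csqrt w))%:C * ((cmod (csqrt w))^-1%:C * csqrt w),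
      0 <= complex.Re ((cmod (csqrt w))^-1%:C * csqrt w) &
      (1 + k) / 2 <= complex.Re ((cmod (csqrt w))^-1%:C * csqrt w) ^+ 2].
Proof.
move=> w0 hk.
set r := cmod (csqrt w).
have r2 : r ^+ 2 = cmod w by rewrite /r cmod_csqrt2.
have wp : 0 < cmod w by rewrite lt_def cmod_eq0 w0 cmod_ge0.
have rp : 0 < r.
  rewrite lt_def cmod_ge0 andbT; apply/eqP => r0; move: r2; rewrite r0 expr0n /=; lra.
have ri : 0 < r^-1 by rewrite invr_gt0.
split => //.
- by rewrite cmodCM ?ltW // mulVf // gt_eqF.
- by rewrite mulrA -rmorphM mulfV ?gt_eqF // mul1r.
- by rewrite cReCM; apply: mulr_ge0; [exact: ltW | exact: csqrt_Re_ge0].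
- rewrite cReCM exprMn csqrt_Re2 exprVn r2.
  have h : (1 + k) / 2 * cmod w <= (cmod w + complex.Re w) / 2 by lra.
  rewrite -(ler_pM2r wp) [X in _ <= X]mulrAC mulVf ?gt_eqF // mul1r.
  exact: h.
Qed.

Lemma c0_bound (R : realType) (a1 s1 : R[i]) (p q : R) :
  cmod a1 = 1 -> cmod s1 = 1 -> 0 <= complex.Re a1 -> 0 <= complex.Re s1 ->
  0 <= p -> p <= complex.Re a1 ^+ 2 -> 0 <= q -> q <= complex.Re s1 ^+ 2 ->
  Num.sqrt p * Num.sqrt q - Num.sqrt (1 - p) * Num.sqrt (1 - q) <= complex.Re (a1 * conjc s1).
Proof.
move=> ha hs ra rs p0 hp q0 hq.
have ea : complex.Re a1 ^+ 2 + complex.Im a1 ^+ 2 = 1 by rewrite -cmod_sq ha expr1n.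
have es : complex.Re s1 ^+ 2 + complex.Im s1 ^+ 2 = 1 by rewrite -cmod_sq hs expr1n.
rewrite cReM cReJ cImJ mulrN opprK.
have h1 : Num.sqrt p <= complex.Re a1.
  by rewrite -(ger0_norm ra) -sqrtr_sqr ler_sqrt ?sqr_ge0.
have h2 : Num.sqrt q <= complex.Re s1.
  by rewrite -(ger0_norm rs) -sqrtr_sqr ler_sqrt ?sqr_ge0.
have h3 : `|complex.Im a1| <= Num.sqrt (1 - p).
  have hI := sqr_ge0 (complex.Im a1).
  rewrite -sqrtr_sqr ler_sqrt; lra.
have h4 : `|complex.Im s1| <= Num.sqrt (1 - q).
  have hI := sqr_ge0 (complex.Im s1).
  rewrite -sqrtr_sqr ler_sqrt; lra.
have h5 : Num.sqrt p * Num.sqrt q <= complex.Re a1 * complex.Re s1.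
  by apply: ler_pM => //; apply: sqrtr_ge0.
have h6 : - (Num.sqrt (1 - p) * Num.sqrt (1 - q)) <= complex.Im a1 * complex.Im s1.
  have : `|complex.Im a1 * complex.Im s1| <= Num.sqrt (1 - p) * Num.sqrt (1 - q).
    by rewrite normrM; apply: ler_pM => //; apply: normr_ge0.
  rewrite ler_norml => /andP [] //.
lra.
Qed.

Lemma cm_pos (R : realType) (p q : R) : 0 <= p <= 1 -> 0 <= q <= 1 -> 1 < p + q ->
  0 < Num.sqrt p * Num.sqrt q - Num.sqrt (1 - p) * Num.sqrt (1 - q).
Proof.
move=> /andP [p0 p1] /andP [q0 q1] pq.
rewrite subr_gt0 -!sqrtrM ?subr_ge0 // ltr_sqrt; last by apply: mulr_gt0; lra.
nra.
Qed.

Lemma det_rows4 (R : realType) (rows : seq (seq R[i])) :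
  \det (mx_of_rows rows) =
  let f i j := nth 0 (nth [::] rows i) j in
  let d3 (f : nat -> nat -> R[i]) i1 i2 i3 j1 j2 j3 :=
    f i1 j1 * (f i2 j2 * f i3 j3 - f i2 j3 * f i3 j2)
  - f i1 j2 * (f i2 j1 * f i3 j3 - f i2 j3 * f i3 j1)
  + f i1 j3 * (f i2 j1 * f i3 j2 - f i2 j2 * f i3 j1) in
  f 0%N 0%N * d3 f 1%N 2%N 3%N 1%N 2%N 3%N - f 0%N 1%N * d3 f 1%N 2%N 3%N 0%N 2%N 3%N
  + f 0%N 2%N * d3 f 1%N 2%N 3%N 0%N 1%N 3%N - f 0%N 3%N * d3 f 1%N 2%N 3%N 0%N 1%N 2%N.
Proof.
by rewrite (@det4f _ (fun i j => nth 0 (nth [::] rows i) j)) // => i j; rewrite mxE.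
Qed.

Lemma detL (R : realType) (rp rm mp mm : R) (n : nat) (lam : R[i]) (xi : 'I_n -> R[i]) :
  mp != 0 -> mm != 0 ->
  \det (Lmat rp rm mp mm lam xi) =
  (rp + rm)%:C * lam * ((mp%:C * Bfun rp mp lam (Afun xi) + mm%:C * Afun xi)
                      + (mm%:C * Bfun rm mm lam (Afun xi) + mp%:C * Afun xi))
  + 4 * Afun xi * (mp%:C * Bfun rp mp lam (Afun xi) + mm%:C * Afun xi)
                * (mm%:C * Bfun rm mm lam (Afun xi) + mp%:C * Afun xi).
Proof.
move=> hp hm.
have hp' : mp%:C != 0 :> R[i] by rewrite (inj_eq (@complexI R)).
have hm' : mm%:C != 0 :> R[i] by rewrite (inj_eq (@complexI R)).
have h1 : Bfun rp mp lam (Afun xi) ^+ 2 = rp%:C / mp%:C * lam + Afun xi ^+ 2.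
  by rewrite /Bfun csqrt_sq -fmorphV -rmorphM.
have h2 : Bfun rm mm lam (Afun xi) ^+ 2 = rm%:C / mm%:C * lam + Afun xi ^+ 2.
  by rewrite /Bfun csqrt_sq -fmorphV -rmorphM.
have := alg_det hp' hm' h1 h2.
rewrite rmorphD /Lmat det_rows4 /= => ->.
done.
Qed.

Lemma final_ineq (R : realType) (L T rA kA K : R) :
  0 <= L -> 0 <= T -> 0 < rA -> 0 < kA -> 0 <= K -> kA * T ^+ 2 <= rA ^+ 2 ->
  K / (2 * (1 + kA^-1) * Num.sqrt (2 * (1 + kA^-1))) * (Num.sqrt L + T) ^+ 3
    <= K * ((L + rA ^+ 2) * Num.sqrt (L + rA ^+ 2)).
Proof.
move=> L0 T0 rA0 kA0 K0 hT.
set be := 2 * (1 + kA^-1).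
set Q := L + rA ^+ 2.
set P := Num.sqrt L + T.
have ki : 0 < kA^-1 by rewrite invr_gt0.
have be0 : 0 < be by rewrite /be; lra.
have sb0 : 0 < Num.sqrt be by rewrite sqrtr_gt0.
have Q0 : 0 <= Q by rewrite /Q; have := sqr_ge0 rA; lra.
have P0 : 0 <= P by rewrite /P; have := sqrtr_ge0 L; lra.
have sL : Num.sqrt L ^+ 2 = L by rewrite sqr_sqrtr.
have T2 : T ^+ 2 <= kA^-1 * rA ^+ 2.
  by have := ler_wpM2l (ltW ki) hT; rewrite mulrA mulVf ?gt_eqF // mul1r.
have P2 : P ^+ 2 <= be * Q.
  have h : P ^+ 2 <= 2 * (L + T ^+ 2).
    have h0 : P ^+ 2 <= 2 * (Num.sqrt L ^+ 2 + T ^+ 2).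
      by rewrite /P; have := sqr_ge0 (Num.sqrt L - T); nra.
    by rewrite sL in h0.
  apply: le_trans h _; rewrite /be /Q.
  have := mulr_ge0 (ltW ki) L0; have := mulr_ge0 (ltW ki) (sqr_ge0 rA); nra.
have Pb : P <= Num.sqrt be * Num.sqrt Q.
  rewrite -sqrtrM; last exact: ltW.
  rewrite -(ger0_norm P0) -sqrtr_sqr ler_sqrt //.
  by apply: mulr_ge0 => //; apply: ltW.
have P3 : P ^+ 3 <= be * Q * (Num.sqrt be * Num.sqrt Q).
  by rewrite exprSr; apply: ler_pM => //; apply: sqr_ge0.
have e : K / (be * Num.sqrt be) * (be * Q * (Num.sqrt be * Num.sqrt Q)) = K * (Q * Num.sqrt Q).
  field; rewrite ?gt_eqF //.
rewrite -e; apply: ler_wpM2l => //.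
apply: divr_ge0 => //; apply: mulr_ge0; apply: ltW => //.
Qed.

Unset Implicit Arguments.
Set Strict Implicit.
Local Close Scope complex_scope.

Theorem lemma5p3 (R : realType) (n : nat) (rp rm mp mm eps eta : R) :
  (2 <= n)%N ->
  0 < rp -> 0 < rm -> 0 < mp -> 0 < mm ->
  0 < eps -> eps < pi / 2 ->
  0 < eta -> eta < Num.min (pi / 4) (eps / 2) ->
  exists c : R, 0 < c /\
    forall (lam : R[i]) (xi : 'I_n.-1 -> R[i]),
      Sigma eps lam -> (forall j, tSigma eta (xi j)) ->
      c * (Num.sqrt (cmod lam) + tildeA xi) ^+ 3
        <= cmod (\det (Lmat rp rm mp mm lam xi)).
Proof.
Local Open Scope complex_scope.
move=> n2 rp0 rm0 mp0 mm0 e0 epi2 h0 hmin.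
have hh : (eta < pi / 4) && (eta < eps / 2) by rewrite -lt_min.
case/andP: hh => h4 h2.
have pi0 := pi_gt0 R.
have epi : eps < pi by lra.
have hpi2 : eta < pi / 2 by lra.
set ce := cos eps.
set kA := 2 * cos eta ^+ 2 - 1.
have ekA : kA = cos (eta *+ 2) by rewrite cos_mulr2n /kA mulr2n mulrDl mul1r; ring.
have ce0 : 0 < ce by apply: cos_gt0_pihalf; apply/andP; split; lra.
have kce : ce < kA.
  rewrite ekA /ce; apply: cos_lt_of; rewrite ?mulr2n; lra.
have kA1 : kA <= 1 by rewrite ekA; apply: cos_le1.
have kA0 : 0 < kA by lra.
set p := (1 + kA) / 2.
set q := (1 + - ce) / 2.
have p01 : 0 <= p <= 1 by apply/andP; split; rewrite /p; lra.
have q01 : 0 <= q <= 1 by have hc := cos_le1 eps; apply/andP; split; rewrite /q; lra.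
have pq : 1 < p + q by rewrite /p /q; lra.
set cm := Num.sqrt p * Num.sqrt q - Num.sqrt (1 - p) * Num.sqrt (1 - q).
have cm0 : 0 < cm by apply: cm_pos.
set a := rp / mp.
set b := rm / mm.
have a0 : 0 < a by rewrite /a divr_gt0.
have b0 : 0 < b by rewrite /b divr_gt0.
set al := Num.sqrt (cm * Num.min (Num.min a b) 1 * Num.min mp mm ^+ 2 / 4).
set K := cm * Num.min ((mp * a + mm * b) * al) (2 * al ^+ 2).
have al0 : 0 < al.
  rewrite /al sqrtr_gt0; apply: divr_gt0 => //; apply: mulr_gt0; last first.
    by apply: exprn_gt0; rewrite lt_min mp0 mm0.
  by apply: mulr_gt0 => //; rewrite !lt_min a0 b0 ltr01.
have K0 : 0 < K.
  rewrite /K; apply: mulr_gt0 => //; rewrite lt_min; apply/andP; split.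
    apply: mulr_gt0 => //; have := mulr_gt0 mp0 a0; have := mulr_gt0 mm0 b0; lra.
  by apply: mulr_gt0 => //; apply: exprn_gt0.
have ki : 0 < kA^-1 by rewrite invr_gt0.
exists (K / (2 * (1 + kA^-1) * Num.sqrt (2 * (1 + kA^-1)))); split.
  apply: divr_gt0 => //; apply: mulr_gt0; first lra.
  by rewrite sqrtr_gt0; lra.
move=> lam xi Sig hxi.
have [l0 hRel] := Sigma_Re e0 epi Sig.
have [hS1 hS2 hT] := S_facts n2 h0 hpi2 hxi.
move: hS1 hS2; rewrite -/kA.
set S := \sum_(j < n.-1) xi j ^+ 2 => hS1 hS2.
have hSk : kA * cmod S <= complex.Re S.
  apply: le_trans hS1; apply: ler_wpM2l => //; lra.
have S0 : S != 0.
  apply/eqP => S0; move: hS1; rewrite S0 /=.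
  have := mulr_gt0 kA0 (exprn_gt0 2 hT); lra.
have eA : Afun xi = csqrt S by [].
have [rA0 ha1 eA1 ra1 pa1] := csqrt_unit S0 hSk.
have hRel' : - ce * cmod lam <= complex.Re lam by [].
have [rs0 hs1 es1 rs1 ps1] := csqrt_unit l0 hRel'.
move: rA0 ha1 eA1 ra1 pa1 rs0 hs1 es1 rs1 ps1.
set rA := cmod (csqrt S); set a1 := (rA^-1)%:C * csqrt S.
set rs := cmod (csqrt lam); set s1 := (rs^-1)%:C * csqrt lam.
move=> rA0 ha1 eA1 ra1 pa1 rs0 hs1 es1 rs1 ps1.
have c0cm : cm <= complex.Re (a1 * conjc s1).
  apply: c0_bound => //; [by case/andP: p01 | by case/andP: q01].
have p0 : 0 < p by rewrite /p; lra.
have q0 : 0 < q by rewrite /q; lra.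
try rewrite -/p in pa1. try rewrite -/q in ps1.
have Ra1 : 0 < complex.Re a1.
  rewrite lt_def ra1 andbT; apply/eqP => e; move: pa1; rewrite e expr0n /=; lra.
have Rs1 : 0 < complex.Re s1.
  rewrite lt_def rs1 andbT; apply/eqP => e; move: ps1; rewrite e expr0n /=; lra.
have c0p : 0 < complex.Re (a1 * conjc s1) by lra.
have elam : lam = (rs%:C * s1) * (rs%:C * s1) by rewrite -es1 -expr2 csqrt_sq.
have eBp : Bfun rp mp lam (Afun xi) ^+ 2 = a%:C * lam + Afun xi ^+ 2 by exact: csqrt_sq.
have eBm : Bfun rm mm lam (Afun xi) ^+ 2 = b%:C * lam + Afun xi ^+ 2 by exact: csqrt_sq.
have [hX hY hBp hBm hD] := core1 ha1 hs1 Ra1 Rs1 c0p rA0 rs0 mp0 mm0 a0 b0 eA1 elam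
   eBp (csqrt_Re_ge0 _) eBm (csqrt_Re_ge0 _) (erefl _) (erefl _).
have hc2 := core2 (cmod_ge0 lam) rA0 (cmod_ge0 _) (cmod_ge0 _) (cmod_ge0 _) (cmod_ge0 _)
   mp0 mm0 a0 b0 cm0 c0cm hX hY hBp hBm hD.
have er : mp * a + mm * b = rp + rm.
  by rewrite /a /b; field; rewrite ?gt_eqF.
rewrite detL ?gt_eqF // -er.
apply: le_trans hc2.
have eS : rA ^+ 2 = cmod S by rewrite /rA cmod_csqrt2.
have hT2 : kA * tildeA xi ^+ 2 <= rA ^+ 2.
  rewrite eS; apply: le_trans hS1 _; exact: Re_le_cmod.
apply: final_ineq => //; [exact: cmod_ge0 | exact: ltW | exact: ltW].
Qed.
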